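(* \begin{enumerate} \item The sets $[2,3],[2,4],[3,6],[3,7],[4,9],[4,10],[4,11]$ and $\{2,4\},\{2,5\},\{2,6\},\{2,3,5\},\{2,4,5\}$ all lie in $\mathcal L(C_2^5)$. \item For each integer $k\ge 2$, the sets $[2k,6k-4],[2k,6k-3],[2k,6k-2],[2k,6k-1]$ lie in $\mathcal L(C_2^5)$. \item For each integer $k\ge 1$, the sets $[2k+1,6k-2],[2k+1,6k-1],[2k+1,6k],[2k+1,6k+1]$ lie in $\mathcal L(C_2^5)$. \end{enumerate}
   Context: $C_2^r$ denotes an elementary abelian $2$-group of rank $r$; $[a,b]=\{x\in\mathbb Z:a\le x\le b\}$. For a subset $G_0$ of a finite abelian group $G$, a sequence over $G_0$ is an element of the free abelian monoid $\mathcal F(G_0)$ with basis $G_0$ (a finite unordered list of elements of $G_0$, repetitions allowed). $\mathcal B(G_0)$ is the monoid of zero-sum sequences over $G_0$ (including the empty sequence). An atom is a minimal zero-sum sequence, i.e. a nonempty zero-sum sequence that is not a product of two nonempty zero-sum sequences. For $B\in\mathcal B(G_0)$, $\mathsf L(B)=\{k\in\mathbb N_0: B \text{ is a product of } k \text{ atoms}\}$, and $\mathcal L(G_0)=\{\mathsf L(B):B\in\mathcal B(G_0)\}$; $\mathcal L(G)$ is the case $G_0=G$. *)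

(* Defs.v *)
From HB Require Import structures.
From mathcomp Require Import all_boot all_order all_algebra.
Set Implicit Arguments. Unset Strict Implicit. Unset Printing Implicit Defensive.
Import GRing.Theory.
Local Open Scope ring_scope.

(* Sequences over a finite abelian group G: the free abelian monoid F(G),
   represented by multiplicity functions G -> nat. *)
Definition fseq (G : finZmodType) := {ffun G -> nat}.

Definition seq_one (G : finZmodType) : fseq G := [ffun => 0%N].

Definition seq_mul (G : finZmodType) (A B : fseq G) : fseq G :=
  [ffun g => (A g + B g)%N].

Definition sigma (G : finZmodType) (S : fseq G) : G := \sum_(g : G) g *+ S g.

Definition zero_sum (G : finZmodType) (S : fseq G) : Prop := sigma S = 0.

Definition atom (G : finZmodType) (S : fseq G) : Prop :=
  [/\ zero_sum S, S <> seq_one G &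
      ~ (exists A B : fseq G, [/\ zero_sum A, zero_sum B, A <> seq_one G,
                                 B <> seq_one G & S = seq_mul A B])].

Definition in_length_set (G : finZmodType) (B : fseq G) (k : nat) : Prop :=
  exists s : seq (fseq G), [/\ size s = k, (forall A, A \in s -> atom A) &
     B = [ffun g => \sum_(A <- s) A g]%N].

Definition in_system_of_sets (G : finZmodType) (L : nat -> Prop) : Prop :=
  exists B : fseq G, zero_sum B /\ forall k, in_length_set B k <-> L k.

Definition C2_5 : finZmodType := 'rV['F_2]_5.

Definition Lset (L : nat -> Prop) : Prop := in_system_of_sets C2_5 L.

(* Main.v *)
Require Import Defs.
From mathcomp Require Import all_boot all_order all_algebra.
From mathcomp Require Import zify.
Import GRing.Theory.
Set Implicit Arguments. Unset Strict Implicit. Unset Printing Implicit Defensive.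

Notation G := C2_5.
Definition el (n : nat) : G := (\row_(j < 5) ((odd (n %/ 2 ^ j))%:R : 'F_2))%R.
Definition bits (n : nat) : seq bool := [seq odd (n %/ 2 ^ j) | j <- iota 0 5].

Lemma el_coord n (i : 'I_1) (j : 'I_5) : el n i j = ((odd (n %/ 2 ^ j))%:R)%R.
Proof. by rewrite mxE. Qed.

Lemma F2b_inj (a b : bool) : (a%:R : 'F_2)%R = (b%:R)%R -> a = b.
Proof. by case: a; case: b. Qed.

Lemma eq_el m n : (el m == el n) = (bits m == bits n).
Proof.
apply/eqP/eqP => H.
  rewrite /bits; apply/eq_in_map => j; rewrite mem_iota => /andP[_ hj].
  have := congr1 (fun x : G => x ord0 (Ordinal hj)) H.
  by rewrite !el_coord; apply: F2b_inj.
apply/rowP => j; rewrite !el_coord.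
have := congr1 (nth false ^~ j) H.
by rewrite /bits !(nth_map 0) ?size_iota // !nth_iota // => ->.
Qed.

Lemma el0 : el 0 = 0%R.
Proof. by apply/rowP => j; rewrite mxE [RHS]mxE div0n. Qed.

Lemma mem_el m ns : (el m \in map el ns) = (bits m \in map bits ns).
Proof.
elim: ns => //= n ns IH; by rewrite !in_cons IH eq_el.
Qed.

Lemma uniq_el ns : uniq (map bits ns) -> uniq (map el ns).
Proof.
elim: ns => //= n ns IH /andP[h1 h2]; rewrite IH // andbT mem_el //.
Qed.

Lemma F2add (a b : 'F_2) : nat_of_ord (a + b)%R = ((a + b) %% 2)%N.
Proof. by []. Qed.
Lemma F2nat (b : bool) : nat_of_ord (b%:R : 'F_2)%R = b.
Proof. by case: b. Qed.
Lemma F2lt (a : 'F_2) : (a < 2)%N.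
Proof. by case: a. Qed.
Lemma F2mn (a : 'F_2) n : nat_of_ord (a *+ n)%R = ((a * n) %% 2)%N.
Proof.
elim: n => [|n IH]; first by rewrite GRing.mulr0n muln0.
by rewrite GRing.mulrS F2add IH modnDmr mulnS.
Qed.
Lemma F2sum (r : seq nat) (F : nat -> 'F_2) :
  nat_of_ord (\sum_(n <- r) F n)%R = ((\sum_(n <- r) nat_of_ord (F n)) %% 2)%N.
Proof.
elim: r => [|n r IH]; first by rewrite !big_nil.
by rewrite !big_cons F2add IH modnDmr.
Qed.
Lemma F2eq0 (a : 'F_2) : (a = 0)%R <-> nat_of_ord a = 0%N.
Proof. by split => [->//|H]; apply: val_inj. Qed.


Definition mk (l : seq G) : fseq G := [ffun x => count_mem x l].
Definition mkc (l : seq nat) : fseq G := mk (map el l).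
Definition sizef (A : fseq G) := \sum_(x : G) A x.
Definition prof (ns : seq nat) (A : fseq G) := [seq A (el n) | n <- ns].
Definition supp (ns : seq nat) (A : fseq G) := forall x, x \notin map el ns -> A x = 0.
Definition parj (ns w : seq nat) (j : nat) :=
  odd (sumn [seq p.1 * odd (p.2 %/ 2 ^ j) | p <- zip w ns]).
Definition par ns w := all (fun j => ~~ parj ns w j) (iota 0 5).

Lemma sum_supp ns (F : G -> nat) : uniq (map bits ns) ->
  (forall x, x \notin map el ns -> F x = 0) ->
  \sum_(x : G) F x = \sum_(n <- ns) F (el n).
Proof.
move=> /uniq_el u H.
have -> : \sum_(n <- ns) F (el n) = \sum_(x <- map el ns) F x by rewrite big_map.
rewrite [RHS]big_uniq // [RHS]big_mkcond /=.
by apply: eq_bigr => x _; case: ifP => // /negbT /H.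
Qed.

Lemma sum_suppR ns (F : G -> G) : uniq (map bits ns) ->
  (forall x, x \notin map el ns -> F x = 0%R) ->
  (\sum_(x : G) F x = \sum_(n <- ns) F (el n))%R.
Proof.
move=> /uniq_el u H.
have -> : (\sum_(n <- ns) F (el n) = \sum_(x <- map el ns) F x)%R by rewrite big_map.
rewrite [RHS]big_uniq // [RHS]big_mkcond /=.
by apply: eq_bigr => x _; case: ifP => // /negbT /H.
Qed.

Lemma zip_map_self (f : nat -> nat) s : zip (map f s) s = [seq (f x, x) | x <- s].
Proof. by elim: s => //= x s ->. Qed.

Lemma sum_mod2 (r : seq nat) (F : nat -> nat) :
  ((\sum_(i <- r) (F i %% 2)) %% 2 = (\sum_(i <- r) F i) %% 2)%N.
Proof.
elim: r => [|n r IH]; first by rewrite !big_nil.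
by rewrite !big_cons -modnDm IH modn_mod modnDm.
Qed.

Lemma zs_prof ns A : uniq (map bits ns) -> supp ns A ->
  zero_sum A <-> par ns (prof ns A).
Proof.
move=> u sA.
have E : sigma A = (\sum_(n <- ns) el n *+ A (el n))%R.
  by rewrite /sigma (@sum_suppR ns) // => x /sA ->.
have Ej : forall j : 'I_5, nat_of_ord (sigma A ord0 j) =
     (sumn [seq p.1 * odd (p.2 %/ 2 ^ j) | p <- zip (prof ns A) ns] %% 2)%N.
  move=> j; rewrite E summxE F2sum /prof zip_map_self -map_comp sumnE big_map.
  rewrite -sum_mod2 -[RHS]sum_mod2; congr (_ %% 2)%N.
  by apply: eq_bigr => n _ /=; rewrite mulmxnE F2mn el_coord F2nat modn_mod mulnC.
split.
  move=> zs; apply/allP => j; rewrite mem_iota add0n => /andP[_ hj].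
  have := Ej (Ordinal hj); rewrite /zero_sum in zs; rewrite zs mxE /parj /= => H.
  by rewrite modn2 in H; case: odd H.
move=> /allP P; apply/rowP => j; rewrite [RHS]mxE; apply/F2eq0.
rewrite Ej; have := P j; rewrite mem_iota /= ltn_ord => /(_ isT).
by rewrite /parj modn2 => /negbTE ->.
Qed.


Lemma sigma_mul (A B : fseq G) : sigma (seq_mul A B) = (sigma A + sigma B)%R.
Proof.
rewrite /sigma -big_split /=; apply: eq_bigr => x _.
by rewrite ffunE GRing.mulrnDr.
Qed.

Lemma sigma_mk (l : seq G) : sigma (mk l) = (\sum_(x <- l) x)%R.
Proof.
elim: l => [|a l IH].
  by rewrite big_nil /sigma big1 // => x _; rewrite ffunE.
rewrite big_cons -IH /sigma.
have -> : (\sum_x (x *+ mk (a :: l) x) = \sum_x (x *+ (x == a) + x *+ mk l x))%R.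
  by apply: eq_bigr => x _; rewrite !ffunE /= GRing.mulrnDr eq_sym.
rewrite big_split /=; congr (_ + _)%R.
rewrite (bigD1 a) //= eqxx GRing.mulr1n big1 ?GRing.addr0 // => x /negbTE ->.
by rewrite GRing.mulr0n.
Qed.

Lemma xx0 (x : G) : (x + x = 0)%R.
Proof.
apply/rowP => j; rewrite !mxE; apply/F2eq0; rewrite F2add.
by case: (x ord0 j) => [[|[|]]].
Qed.

Definition cntv (ns l : seq nat) := [seq count (fun m => bits m == bits n) l | n <- ns].

Lemma prof_mkc ns l : prof ns (mkc l) = cntv ns l.
Proof.
apply/eq_map => n; rewrite ffunE count_map; apply: eq_count => m /=.
by rewrite eq_el.
Qed.

Lemma supp_mkc ns l : all (mem ns) l -> supp ns (mkc l).
Proof.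
move=> /allP H x xn; rewrite ffunE; apply/count_memPn; apply: contra xn.
by case/mapP => m /H mn ->; apply: map_f.
Qed.

Lemma prof_one ns : prof ns (seq_one G) = nseq (size ns) 0.
Proof. by elim: ns => //= n ns ->; rewrite ffunE. Qed.

Lemma supp_le ns (A A1 : fseq G) : (forall x, A1 x <= A x) -> supp ns A -> supp ns A1.
Proof. by move=> le sA x /sA H; move: (le x); rewrite H leqn0 => /eqP. Qed.

Lemma supp_one ns : supp ns (seq_one G).
Proof. by move=> x _; rewrite ffunE. Qed.

Lemma prof_inj ns (A A' : fseq G) : supp ns A -> supp ns A' -> prof ns A = prof ns A' -> A = A'.
Proof.
move=> sA sA' E; apply/ffunP => x; case: (boolP (x \in map el ns)); last first.
  by move=> H; rewrite sA // sA'.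
case/mapP => n nn ->; have /eq_in_map := E; by apply.
Qed.

Lemma sizef_supp ns (A : fseq G) : uniq (map bits ns) -> supp ns A -> sizef A = sumn (prof ns A).
Proof. by move=> u sA; rewrite /sizef (@sum_supp ns) // sumnE big_map. Qed.

Lemma atom_intro (A : fseq G) : zero_sum A -> A <> seq_one G ->
  (forall A1 : fseq G, (forall x, A1 x <= A x) -> zero_sum A1 -> A1 = seq_one G \/ A1 = A) ->
  atom A.
Proof.
move=> zA nA H; split => // -[A1 [A2 [z1 z2 n1 n2 e]]].
have le : forall x, A1 x <= A x by move=> x; rewrite e ffunE leq_addr.
case: (H A1 le z1) => // E; apply: n2; apply/ffunP => x.
have := congr1 (fun f : fseq G => f x) e; rewrite E !ffunE => /eqP.
by rewrite -{1}(addn0 (A x)) eqn_add2l => /eqP <-.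
Qed.

Lemma atom_split (A P : fseq G) : atom A -> zero_sum P -> P <> seq_one G ->
  (forall x, P x <= A x) -> A = P.
Proof.
move=> [zA nA nsplit] zP nP le.
pose R : fseq G := [ffun x => A x - P x].
have eA : A = seq_mul P R by apply/ffunP => x; rewrite !ffunE subnKC.
have zR : zero_sum R.
  move: zA; rewrite /zero_sum eA sigma_mul zP GRing.add0r //.
case: (eqVneq R (seq_one G)) => [R1|nR].
  by rewrite eA R1; apply/ffunP => x; rewrite !ffunE addn0.
by exfalso; apply: nsplit; exists P, R; split => //; apply/eqP.
Qed.

Lemma mk_one (l : seq G) : mk l = seq_one G -> l = [::].
Proof.
case: l => // a l /(congr1 (fun f : fseq G => f a)); by rewrite !ffunE /= eqxx.
Qed.

Lemma atom_sq (A : fseq G) (x : G) : atom A -> 1 < A x -> A = mk [:: x; x].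
Proof.
move=> aA h; apply: atom_split => //.
- by rewrite /zero_sum sigma_mk !big_cons big_nil GRing.addr0 xx0.
- by move/mk_one.
- move=> y; rewrite ffunE /=; case E: (x == y) => //; by move/eqP: E => <-.
Qed.

Lemma atom_zero (A : fseq G) : atom A -> 0 < A 0%R -> A = mk [:: 0%R].
Proof.
move=> aA h; apply: atom_split => //.
- by rewrite /zero_sum sigma_mk !big_cons big_nil GRing.addr0.
- by move/mk_one.
- by move=> y; rewrite ffunE /=; case E: (_ == y) => //; move/eqP: E => <-.
Qed.


Fixpoint subvecs (v : seq nat) : seq (seq nat) :=
  if v is a :: v' then [seq i :: w | i <- iota 0 a.+1, w <- subvecs v'] else [:: [::]].

Lemma subvecsP v w : all2 leq w v -> w \in subvecs v.
Proof.
elim: v w => [|a v IH] [|b w] // => /andP[ba H].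
apply/flatten_mapP; exists b; first by rewrite mem_iota add0n ltnS.
by apply: map_f; apply: IH.
Qed.

Fixpoint boolvecs (n : nat) : seq (seq nat) :=
  if n is n'.+1 then [seq b :: w | b <- [:: 0; 1], w <- boolvecs n'] else [:: [::]].

Lemma boolvecsP w : all (fun a => a <= 1) w -> w \in boolvecs (size w).
Proof.
elim: w => [|b w IH] // => /andP[hb H].
apply/flatten_mapP; exists b; first by case: b hb => [|[|]].
by apply: map_f; apply: IH.
Qed.

Lemma all2_map (A : fseq G) (B : fseq G) (s : seq nat) :
  (forall x, A x <= B x) -> all2 leq [seq A (el n) | n <- s] [seq B (el n) | n <- s].
Proof. by move=> H; elim: s => //= n s ->; rewrite H. Qed.

Definition zerov n := nseq n 0.

Definition atomb (ns l : seq nat) :=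
  let v := cntv ns l in
  [&& uniq (map bits ns), all (mem ns) l, v != zerov (size ns), par ns v &
      all (fun w => ~~ par ns w || (w == zerov (size ns)) || (w == v)) (subvecs v)].

Lemma atombP ns l : atomb ns l -> atom (mkc l).
Proof.
case/and5P => u al nz pv H.
have sl := supp_mkc al.
apply: atom_intro.
- by apply/(zs_prof u sl); rewrite prof_mkc.
- by move=> E; move: nz; rewrite -prof_mkc E prof_one eqxx.
move=> A1 le z1.
have s1 := supp_le le sl.
have : prof ns A1 \in subvecs (cntv ns l) by rewrite -prof_mkc; apply/subvecsP/all2_map.
move/allP: H => H /H; rewrite (zs_prof u s1) in z1; rewrite z1 /=.
case/orP => /eqP E.
  by left; apply: (prof_inj s1 (@supp_one ns)); rewrite E prof_one.
by right; apply: (prof_inj s1 sl); rewrite E prof_mkc.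
Qed.

Definition sqv n i := [seq 2 * (j == i) | j <- iota 0 n].
Definition sqs n := [seq sqv n i | i <- iota 0 n].

Definition classb ns (Vs : seq (seq nat)) :=
  [&& uniq (map bits ns), all (fun n => bits n != bits 0) ns &
      all (fun w => ~~ par ns w || (w == zerov (size ns)) || (w \in Vs)) (boolvecs (size ns))].

Lemma classP ns Vs : classb ns Vs -> forall A, atom A -> supp ns A ->
  prof ns A \in sqs (size ns) ++ Vs.
Proof.
case/and3P => u nz H A aA sA.
case: (boolP [exists x, 1 < A x]).
  case/existsP => x hx; have eA := atom_sq aA hx.
  have xn : x \in map el ns by apply: contraLR hx => /sA ->.
  rewrite mem_cat; apply/orP; left.
  have ue := uniq_el u.
  pose i := index x (map el ns).
  have hi : i < size ns by rewrite -(size_map el) index_mem.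
  have ex : x = el (nth 0 ns i) by rewrite -(nth_map 0 0%R) // nth_index.
  apply/mapP; exists i; first by rewrite mem_iota.
  apply: (@eq_from_nth _ 0); first by rewrite /prof /sqv !size_map size_iota.
  move=> j; rewrite /prof size_map => hj.
  rewrite eA (nth_map 0) // /sqv (nth_map 0) ?size_iota // nth_iota // add0n ffunE /=.
  rewrite ex -!(nth_map 0 0%R el) //.
  by rewrite (nth_uniq 0%R) ?size_map // eq_sym; case: (j == i).
move=> hx.
have le1 : forall x, A x <= 1.
  by move=> x; rewrite leqNgt; apply: contra hx => h; apply/existsP; exists x.
have Hb : prof ns A \in boolvecs (size ns).
  have := @boolvecsP (prof ns A); rewrite size_map; apply.
  by apply/allP => a /mapP [n _ ->].
case: aA => zA nA _; have pA : par ns (prof ns A) by apply/(zs_prof u sA).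
move/allP: H => /(_ _ Hb); rewrite pA /= mem_cat => /orP [|->]; last by rewrite orbT.
move/eqP => E; exfalso; apply: nA; apply: (prof_inj sA (@supp_one ns)).
by rewrite E prof_one.
Qed.


Lemma sizef_mk (l : seq G) : sizef (mk l) = size l.
Proof.
elim: l => [|a l IH]; first by rewrite /sizef big1 // => x _; rewrite ffunE.
rewrite /sizef /=.
have -> : \sum_x mk (a :: l) x = \sum_x ((x == a) + mk l x).
  by apply: eq_bigr => x _; rewrite !ffunE /= eq_sym.
rewrite big_split /= -/(sizef (mk l)) IH (bigD1 a) //= eqxx big1 // => x /negbTE ->.
done.
Qed.

Lemma sum_types (T : eqType) (s Vs : seq T) (F : T -> nat) : uniq Vs -> all (mem Vs) s ->
  \sum_(a <- s) F a = \sum_(v <- Vs) count_mem v s * F v.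
Proof.
move=> u; elim: s => [|a s IH]; first by rewrite big_nil big1.
case/andP => aV H; rewrite big_cons IH //.
have -> : \sum_(v <- Vs) count_mem v (a :: s) * F v =
   \sum_(v <- Vs) ((a == v) * F v + count_mem v s * F v).
  by apply: eq_bigr => v _; rewrite /= mulnDl.
rewrite big_split /=; congr (_ + _).
rewrite (big_rem a) //= eqxx mul1n big_seq big1 ?addn0 // => v.
by rewrite mem_rem_uniq // inE => /andP[/negbTE]; rewrite eq_sym => ->.
Qed.

Lemma fact_le (B : fseq G) (s : seq (fseq G)) (A : fseq G) x : B = [ffun g => \sum_(A' <- s) A' g] -> A \in s -> A x <= B x.
Proof.
by move=> -> As; rewrite ffunE (big_rem A) //= leq_addr.
Qed.

Lemma sizef_sum (B : fseq G) (s : seq (fseq G)) : B = [ffun g => \sum_(A' <- s) A' g] ->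
  sizef B = \sum_(A <- s) sizef A.
Proof.
move=> ->; rewrite /sizef exchange_big /=; apply: eq_bigr => x _; by rewrite ffunE.
Qed.

Lemma mkc_flatten (sl : seq (seq nat)) :
  mkc (flatten sl) = [ffun g => \sum_(A <- map mkc sl) A g].
Proof.
apply/ffunP => x; rewrite !ffunE big_map.
elim: sl => [|l sl IH]; first by rewrite big_nil.
by rewrite big_cons /= map_cat count_cat IH ffunE.
Qed.

Lemma mkc_perm l1 l2 : perm_eq l1 l2 -> mkc l1 = mkc l2.
Proof.
move=> p; apply/ffunP => x; rewrite !ffunE; apply/permP; exact: perm_map.
Qed.

Lemma fact_intro ns0 (lB : seq nat) (sl : seq (seq nat)) :
  all (atomb ns0) sl -> perm_eq lB (flatten sl) -> in_length_set (mkc lB) (size sl).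
Proof.
move=> /allP H p; exists (map mkc sl); split.
- by rewrite size_map.
- by move=> A /mapP [l /H /atombP ? ->].
- by rewrite (mkc_perm p) mkc_flatten.
Qed.

Lemma sigma_sum (s : seq (fseq G)) : sigma [ffun g => \sum_(A <- s) A g] = (\sum_(A <- s) sigma A)%R.
Proof.
elim: s => [|A s IH].
  by rewrite big_nil /sigma big1 // => x _; rewrite ffunE big_nil.
rewrite big_cons -IH -sigma_mul; congr sigma; apply/ffunP => x.
by rewrite !ffunE big_cons.
Qed.

Lemma zs_of_fact (B : fseq G) k : in_length_set B k -> zero_sum B.
Proof.
case=> s [_ H ->]; rewrite /zero_sum sigma_sum big_seq big1 // => A /H [].
by [].
Qed.

Lemma B0 lB : mkc lB 0%R = count (fun m => bits m == bits 0) lB.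
Proof. by rewrite -el0 ffunE count_map; apply: eq_count => m /=; rewrite eq_el. Qed.

Lemma lenbound ns (Vs : seq (seq nat)) lB k : classb ns Vs ->
  all (fun v => (2 <= sumn v <= 6)) (sqs (size ns) ++ Vs) -> all (mem (0 :: ns)) lB ->
  in_length_set (mkc lB) k ->
  2 * k <= size lB + count (fun m => bits m == bits 0) lB /\
  size lB + 5 * count (fun m => bits m == bits 0) lB <= 6 * k.
Proof.
move=> cl hl al [s [<- Hs E]].
have cl' := cl; case/and3P: cl' => u _ _.
have per : forall A, A \in s ->
   (A 0%R = 1 /\ sizef A = 1) \/ (A 0%R = 0 /\ 2 <= sizef A <= 6).
  move=> A As; have aA := Hs A As.
  case: (posnP (A 0%R)) => h0; last first.
    left; rewrite (atom_zero aA h0) sizef_mk ffunE /= eqxx; done.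
  right; split => //.
  have sA : supp ns A.
    move=> x xn; case: (eqVneq x 0%R) => [->//|nx].
    have : x \notin map el (0 :: ns) by rewrite /= inE negb_or xn el0 nx.
    move/(supp_mkc al) => Bx; have := fact_le x E As; by rewrite Bx leqn0 => /eqP.
  have := classP cl aA sA; move/allP: hl => hl /hl.
  by rewrite (sizef_supp u sA).
have sB : size lB = \sum_(A <- s) sizef A by rewrite -(size_map el) -sizef_mk -/(mkc lB) (sizef_sum E).
have zB : count (fun m => bits m == bits 0) lB = \sum_(A <- s) A 0%R.
  by rewrite -B0 E ffunE.
rewrite sB zB -(sum1_size s) -big_split /= !big_distrr -big_split /=; split.
  by rewrite big_seq_cond [X in _ <= X]big_seq_cond; apply: leq_sum => A /andP[As _]; case: (per A As) => [[-> ->]|[-> /andP[h _]]]; lia.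
by rewrite big_seq_cond [X in _ <= X]big_seq_cond; apply: leq_sum => A /andP[As _]; case: (per A As) => [[-> ->]|[-> /andP[_ h]]]; lia.
Qed.

Lemma exact_counts ns (Vs : seq (seq nat)) lB (s : seq (fseq G)) : classb ns Vs -> all (mem ns) lB ->
  mkc lB = [ffun g => \sum_(A <- s) A g] -> (forall A, A \in s -> atom A) ->
  uniq (sqs (size ns) ++ Vs) ->
  size s = \sum_(v <- sqs (size ns) ++ Vs) count_mem v (map (prof ns) s) /\
  forall i, i < size ns -> nth 0 (cntv ns lB) i =
     \sum_(v <- sqs (size ns) ++ Vs) count_mem v (map (prof ns) s) * nth 0 v i.
Proof.
move=> cl al E Hs uV.
have cl' := cl; case/and3P: cl' => u _ _.
have inV : all (mem (sqs (size ns) ++ Vs)) (map (prof ns) s).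
  apply/allP => p /mapP [A As ->]; apply: (classP cl (Hs A As)).
  by apply: (supp_le (fun x => fact_le x E As)); apply: supp_mkc.
split.
  have -> : size s = \sum_(p <- map (prof ns) s) 1 by rewrite big_map sum1_size.
  rewrite (sum_types (fun _ => 1) uV inV).
  by apply: eq_bigr => v _; rewrite muln1.
move=> i hi; rewrite -(sum_types (fun v => nth 0 v i) uV inV) big_map -prof_mkc E.
rewrite /prof (nth_map 0) // ffunE; apply: eq_bigr => A _; by rewrite (nth_map 0).
Qed.


Definition Fok ns0 (lB : seq nat) (Fs : seq (seq (seq nat))) :=
  all (fun sl => all (atomb ns0) sl && perm_eq lB (flatten sl)) Fs.

Lemma Fok_nth ns0 lB Fs r : Fok ns0 lB Fs -> r < size Fs ->
  in_length_set (mkc lB) (size (nth [::] Fs r)).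
Proof.
move=> /allP H hr; have /H /andP[h1 h2] := mem_nth [::] hr.
exact: (fact_intro h1 h2).
Qed.

Lemma count_flatten_nseq (T : eqType) (p : pred T) n (l : seq T) :
  count p (flatten (nseq n l)) = n * count p l.
Proof. by elim: n => //= n IH; rewrite count_cat IH mulSn. Qed.

Lemma all_flatten_nseq (T : eqType) (p : pred T) n (l : seq T) :
  all p l -> all p (flatten (nseq n l)).
Proof. by move=> H; elim: n => //= n IH; rewrite all_cat H. Qed.

Lemma count_sq (p : pred nat) (U : seq nat) : count p (flatten [seq [:: u; u] | u <- U]) = 2 * count p U.
Proof. elim: U => //= u U ->; case: (p u) => /=; lia. Qed.

Lemma famlow ns0 (U Y : seq nat) Fs a z q q' r :
  atomb ns0 [:: 0] -> atomb ns0 U -> all (fun u => atomb ns0 [:: u; u]) U -> size U = 6 ->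
  Fok ns0 Y Fs -> map size Fs = iota a (size Fs) -> r < size Fs ->
  in_length_set (mkc (nseq z 0 ++ flatten (nseq (q + q') (U ++ U)) ++ Y))
     (z + 2 * q' + 6 * q + (a + r)).
Proof.
move=> a0 aU asq sU FY sF hr.
move/allP: (FY) => /(_ _ (mem_nth [::] hr)) /andP[aY pY].
have sz : size (nth [::] Fs r) = a + r.
  by have := congr1 (nth 0 ^~ r) sF; rewrite (nth_map [::]) // nth_iota.
pose sl := nseq z [:: 0] ++ nseq (2 * q') U ++ flatten (nseq q [seq [:: u; u] | u <- U]) ++ nth [::] Fs r.
have -> : z + 2 * q' + 6 * q + (a + r) = size sl.
  by rewrite /sl !size_cat !size_nseq size_flatten /shape map_nseq sumn_nseq size_map sU sz; lia.
apply: (fact_intro (ns0 := ns0)).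
  rewrite /sl !all_cat !all_nseq a0 aU aY !orbT /=.
  rewrite andbT; apply: all_flatten_nseq.
  by apply/allP => l /mapP [u uU ->]; move/allP: asq; apply.
apply/permP => p; rewrite /sl !flatten_cat !count_cat.
have -> : flatten (nseq z [:: 0]) = nseq z 0 by elim: z {sl} => //= z ->.
rewrite !count_flatten_nseq count_cat (permP pY).
have -> : flatten (flatten (nseq q [seq [:: u; u] | u <- U])) =
          flatten (nseq q (flatten [seq [:: u; u] | u <- U])).
  by elim: q {sl} => [|q IH] //=; rewrite flatten_cat IH.
rewrite count_flatten_nseq count_sq. move: (count p U) (count p (nseq z 0)) (count p (flatten (nth [::] Fs r))) => c1 c2 c3; nia.
Qed.

Lemma mem_cons_sub (ns l : seq nat) : all (mem ns) l -> all (mem (0 :: ns)) l.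
Proof. by move/allP=> H; apply/allP => m /H mn; have mn' : m \in ns := mn; change (m \in 0 :: ns); rewrite in_cons mn' orbT. Qed.

Lemma interval_sys ns Vs lB lo hi : classb ns Vs ->
  all (fun v => (2 <= sumn v <= 6)) (sqs (size ns) ++ Vs) -> all (mem (0 :: ns)) lB ->
  (forall k, 2 * k <= size lB + count (fun m => bits m == bits 0) lB ->
     size lB + 5 * count (fun m => bits m == bits 0) lB <= 6 * k -> lo <= k <= hi) ->
  (forall k, lo <= k <= hi -> in_length_set (mkc lB) k) -> lo <= hi ->
  in_system_of_sets C2_5 (fun k => lo <= k <= hi).
Proof.
move=> cl hl al ar low lh; exists (mkc lB); split.
  by apply: (@zs_of_fact _ lo); apply: low; rewrite leqnn lh.
move=> k; split; last by apply: low.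
by case/(lenbound cl hl al) => h1 h2; apply: ar.
Qed.

Lemma fam ns Vs ns0 U Y Fs a z j w :
  classb ns Vs -> all (fun v => (2 <= sumn v <= 6)) (sqs (size ns) ++ Vs) ->
  atomb ns0 [:: 0] -> atomb ns0 U -> all (fun u => atomb ns0 [:: u; u]) U -> size U = 6 ->
  Fok ns0 Y Fs -> map size Fs = iota a (size Fs) -> size Fs = w.+1 -> 3 <= w ->
  all (mem ns) U -> all (mem ns) Y ->
  count (fun m => bits m == bits 0) U = 0 -> count (fun m => bits m == bits 0) Y = 0 ->
  6 * a < size Y + 6 -> size Y <= 6 * a -> 2 * (a + w) <= size Y -> size Y < 2 * (a + w) + 2 ->
  in_system_of_sets C2_5 (fun k => z + 2 * j + a <= k <= z + 6 * j + a + w).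
Proof.
move=> cl hl a0 aU asq sU FY sF sw w3 mU mY cU cY h1 h2 h3 h4.
apply: (@interval_sys ns Vs (nseq z 0 ++ flatten (nseq j (U ++ U)) ++ Y)) => //.
- rewrite !all_cat all_nseq; apply/and3P; split.
  + by apply/orP; right; apply: mem_head.
  + rewrite all_flatten_nseq // all_cat.
    by apply/andP; split; apply: mem_cons_sub.
  + by apply: mem_cons_sub.
- move=> k; rewrite !count_cat count_nseq count_flatten_nseq count_cat cU cY eqxx /=.
  rewrite !size_cat size_nseq size_flatten /shape map_nseq sumn_nseq size_cat sU.
  move=> k1 k2; lia.
- move=> k hk.
  set d := k - z - 2 * j - a.
  have hr : forall r, r <= w -> r < size Fs by move=> r; rewrite sw ltnS.
  case: (leqP d (4 * j)) => hd.
    have e : j = d %/ 4 + (j - d %/ 4) by lia.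
    have -> : k = z + 2 * (j - d %/ 4) + 6 * (d %/ 4) + (a + d %% 4) by lia.
    by rewrite {1}e; apply: (@famlow ns0 U Y Fs) => //; apply: hr; lia.
  have e : j = j + 0 by lia.
  have -> : k = z + 2 * 0 + 6 * j + (a + (d - 4 * j)) by lia.
  by rewrite {1}e; apply: (@famlow ns0 U Y Fs) => //; apply: hr; lia.
- lia.
Qed.

Lemma sum_foldr (T : Type) (l : seq T) (F : T -> nat) :
  \sum_(v <- l) F v = foldr (fun v a => F v + a) 0 l.
Proof. by elim: l => [|v l IH]; rewrite ?big_nil ?big_cons ?IH. Qed.

Lemma exact_sys ns0 ns Vs lB (P : nat -> Prop) Fs :
  classb ns Vs -> all (mem ns) lB -> uniq (sqs (size ns) ++ Vs) ->
  Fok ns0 lB Fs -> 0 < size Fs ->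
  (forall k, P k -> k \in map size Fs) ->
  (forall c : seq nat -> nat,
     (forall i, i < size ns -> nth 0 (cntv ns lB) i =
        foldr (fun v a => c v * nth 0 v i + a) 0 (sqs (size ns) ++ Vs)) ->
     P (foldr (fun v a => c v + a) 0 (sqs (size ns) ++ Vs))) ->
  in_system_of_sets C2_5 P.
Proof.
move=> cl al uV FB hF low up; exists (mkc lB); split.
  by apply: (@zs_of_fact _ (size (nth [::] Fs 0))); apply: (Fok_nth FB).
move=> k; split.
  case=> s [<- Hs E]; have [h1 h2] := exact_counts cl al E Hs uV.
  rewrite h1 sum_foldr; apply: up => i hi; by rewrite h2 // sum_foldr.
by move/low/mapP => [sl slF ->]; move/allP: FB => /(_ _ slF) /andP[h1 h2]; apply: fact_intro h1 h2.
Qed.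

Lemma flat_nseq0 n : flatten (nseq n [:: 0]) = nseq n 0.
Proof. by elim: n => //= n ->. Qed.

Lemma fam0 ns Vs ns0 Y Fs a z w :
  classb ns Vs -> all (fun v => (2 <= sumn v <= 6)) (sqs (size ns) ++ Vs) ->
  atomb ns0 [:: 0] -> Fok ns0 Y Fs -> map size Fs = iota a (size Fs) -> size Fs = w.+1 ->
  all (mem ns) Y -> count (fun m => bits m == bits 0) Y = 0 ->
  6 * a < size Y + 6 -> size Y <= 6 * a -> 2 * (a + w) <= size Y -> size Y < 2 * (a + w) + 2 ->
  in_system_of_sets C2_5 (fun k => z + a <= k <= z + a + w).
Proof.
move=> cl hl a0 FY sF sw mY cY h1 h2 h3 h4.
apply: (@interval_sys ns Vs (nseq z 0 ++ Y)) => //.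
- rewrite !all_cat all_nseq; apply/andP; split.
  + by apply/orP; right; apply: mem_head.
  + by apply: mem_cons_sub.
- move=> k; rewrite !count_cat count_nseq cY eqxx /= size_cat size_nseq.
  move=> k1 k2; lia.
- move=> k hk.
  have hr : k - z - a < size Fs by rewrite sw; lia.
  move/allP: (FY) => /(_ _ (mem_nth [::] hr)) /andP[aY pY].
  have sz : size (nth [::] Fs (k - z - a)) = a + (k - z - a).
    by have := congr1 (nth 0 ^~ (k - z - a)) sF; rewrite (nth_map [::]) // nth_iota.
  pose sl := nseq z [:: 0] ++ nth [::] Fs (k - z - a).
  have -> : k = size sl by rewrite /sl size_cat size_nseq sz; lia.
  apply: (fact_intro (ns0 := ns0)).
    by rewrite /sl all_cat all_nseq a0 aY orbT.
  apply/permP => p; rewrite /sl flatten_cat !count_cat (permP pY).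
  by rewrite flat_nseq0.
- lia.
Qed.

Lemma sys_ext (P Q : nat -> Prop) : in_system_of_sets C2_5 P -> (forall k, P k <-> Q k) ->
  in_system_of_sets C2_5 Q.
Proof. by case=> B [zB H] E; exists B; split => // k; rewrite H E. Qed.


Definition SA := [:: 1; 2; 4; 8; 16; 3; 5; 30].
Definition NA := 0 :: SA.
Definition VA := [:: [:: 1; 1; 0; 0; 0; 1; 0; 0]; [:: 1; 0; 1; 0; 0; 0; 1; 0]; [:: 0; 1; 1; 0; 0; 1; 1; 0]; [:: 0; 1; 1; 1; 1; 0; 0; 1]; [:: 1; 0; 1; 1; 1; 1; 0; 1]; [:: 1; 1; 0; 1; 1; 0; 1; 1]; [:: 0; 0; 0; 1; 1; 1; 1; 1]].
Lemma clA : classb SA VA. Proof. by vm_compute. Qed.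
Lemma hlA : all (fun v => (2 <= sumn v <= 6)) (sqs (size SA) ++ VA). Proof. by vm_compute. Qed.
Lemma a0A : atomb NA [:: 0]. Proof. by vm_compute. Qed.
Lemma uVA : uniq (sqs (size SA) ++ VA). Proof. by vm_compute. Qed.
Definition SC := [:: 1; 2; 4; 8; 3; 5; 14].
Definition NC := 0 :: SC.
Definition VC := [:: [:: 1; 1; 0; 0; 1; 0; 0]; [:: 1; 0; 1; 0; 0; 1; 0]; [:: 0; 1; 1; 0; 1; 1; 0]; [:: 0; 1; 1; 1; 0; 0; 1]; [:: 1; 0; 1; 1; 1; 0; 1]; [:: 1; 1; 0; 1; 0; 1; 1]; [:: 0; 0; 0; 1; 1; 1; 1]].
Lemma clC : classb SC VC. Proof. by vm_compute. Qed.
Lemma hlC : all (fun v => (2 <= sumn v <= 6)) (sqs (size SC) ++ VC). Proof. by vm_compute. Qed.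
Lemma a0C : atomb NC [:: 0]. Proof. by vm_compute. Qed.
Lemma uVC : uniq (sqs (size SC) ++ VC). Proof. by vm_compute. Qed.
Definition SB := [:: 1; 2; 4; 8; 16; 7; 11; 21].
Definition NB := 0 :: SB.
Definition VB := [:: [:: 1; 1; 1; 0; 0; 1; 0; 0]; [:: 1; 1; 0; 1; 0; 0; 1; 0]; [:: 0; 0; 1; 1; 0; 1; 1; 0]; [:: 1; 0; 1; 0; 1; 0; 0; 1]; [:: 0; 1; 0; 0; 1; 1; 0; 1]; [:: 0; 1; 1; 1; 1; 0; 1; 1]; [:: 1; 0; 0; 1; 1; 1; 1; 1]].
Lemma clB : classb SB VB. Proof. by vm_compute. Qed.
Lemma hlB : all (fun v => (2 <= sumn v <= 6)) (sqs (size SB) ++ VB). Proof. by vm_compute. Qed.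
Lemma a0B : atomb NB [:: 0]. Proof. by vm_compute. Qed.
Lemma uVB : uniq (sqs (size SB) ++ VB). Proof. by vm_compute. Qed.
Definition UA := [:: 1; 4; 8; 16; 3; 30].
Lemma aUA : atomb NA UA. Proof. by vm_compute. Qed.
Lemma asqA : all (fun u => atomb NA [:: u; u]) UA. Proof. by vm_compute. Qed.
Definition Y16 := [:: 1; 1; 2; 2; 4; 4; 8; 8; 16; 16; 3; 3; 5; 5; 30; 30].
Definition F16 :=
  [:: [:: [:: 2; 4; 3; 5]; [:: 1; 2; 8; 16; 5; 30]; [:: 1; 4; 8; 16; 3; 30]];
   [:: [:: 1; 2; 3]; [:: 1; 4; 5]; [:: 2; 4; 8; 16; 30]; [:: 8; 16; 3; 5; 30]];
   [:: [:: 1; 1]; [:: 3; 3]; [:: 5; 5]; [:: 2; 4; 8; 16; 30]; [:: 2; 4; 8; 16; 30]];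
   [:: [:: 8; 8]; [:: 16; 16]; [:: 30; 30]; [:: 1; 2; 3]; [:: 1; 4; 5]; [:: 2; 4; 3; 5]];
   [:: [:: 4; 4]; [:: 8; 8]; [:: 16; 16]; [:: 5; 5]; [:: 30; 30]; [:: 1; 2; 3]; [:: 1; 2; 3]];
   [:: [:: 1; 1]; [:: 2; 2]; [:: 4; 4]; [:: 8; 8]; [:: 16; 16]; [:: 3; 3]; [:: 5; 5]; [:: 30; 30]]].
Lemma FY16 : Fok NA Y16 F16. Proof. by vm_compute. Qed.
Lemma fam16 z j : in_system_of_sets C2_5 (fun k => z + 2 * j + 3 <= k <= z + 6 * j + 3 + 5).
Proof. exact: (@fam SA VA NA UA Y16 F16 3 z j 5 clA hlA a0A aUA asqA erefl FY16 erefl erefl isT isT isT erefl erefl isT isT isT isT). Qed.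
Lemma fam0_16 z : in_system_of_sets C2_5 (fun k => z + 3 <= k <= z + 3 + 5).
Proof. exact: (@fam0 SA VA NA Y16 F16 3 z 5 clA hlA a0A FY16 erefl erefl isT erefl isT isT isT isT). Qed.
Definition Y20 := [:: 1; 1; 2; 2; 4; 4; 4; 4; 8; 8; 16; 16; 3; 3; 3; 3; 5; 5; 30; 30].
Definition F20 :=
  [:: [:: [:: 2; 4; 3; 5]; [:: 2; 4; 3; 5]; [:: 1; 4; 8; 16; 3; 30]; [:: 1; 4; 8; 16; 3; 30]];
   [:: [:: 3; 3]; [:: 1; 4; 5]; [:: 2; 4; 3; 5]; [:: 2; 4; 8; 16; 30]; [:: 1; 4; 8; 16; 3; 30]];
   [:: [:: 3; 3]; [:: 3; 3]; [:: 1; 4; 5]; [:: 1; 4; 5]; [:: 2; 4; 8; 16; 30]; [:: 2; 4; 8; 16; 30]];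
   [:: [:: 1; 1]; [:: 4; 4]; [:: 3; 3]; [:: 3; 3]; [:: 5; 5]; [:: 2; 4; 8; 16; 30]; [:: 2; 4; 8; 16; 30]];
   [:: [:: 4; 4]; [:: 8; 8]; [:: 16; 16]; [:: 3; 3]; [:: 30; 30]; [:: 1; 2; 3]; [:: 1; 4; 5]; [:: 2; 4; 3; 5]];
   [:: [:: 4; 4]; [:: 4; 4]; [:: 8; 8]; [:: 16; 16]; [:: 3; 3]; [:: 5; 5]; [:: 30; 30]; [:: 1; 2; 3]; [:: 1; 2; 3]];
   [:: [:: 1; 1]; [:: 2; 2]; [:: 4; 4]; [:: 4; 4]; [:: 8; 8]; [:: 16; 16]; [:: 3; 3]; [:: 3; 3]; [:: 5; 5]; [:: 30; 30]]].
Lemma FY20 : Fok NA Y20 F20. Proof. by vm_compute. Qed.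
Lemma fam20 z j : in_system_of_sets C2_5 (fun k => z + 2 * j + 4 <= k <= z + 6 * j + 4 + 6).
Proof. exact: (@fam SA VA NA UA Y20 F20 4 z j 6 clA hlA a0A aUA asqA erefl FY20 erefl erefl isT isT isT erefl erefl isT isT isT isT). Qed.
Lemma fam0_20 z : in_system_of_sets C2_5 (fun k => z + 4 <= k <= z + 4 + 6).
Proof. exact: (@fam0 SA VA NA Y20 F20 4 z 6 clA hlA a0A FY20 erefl erefl isT erefl isT isT isT isT). Qed.
Definition Y22 := [:: 1; 1; 2; 2; 4; 4; 8; 8; 8; 8; 16; 16; 16; 16; 3; 3; 5; 5; 30; 30; 30; 30].
Definition F22 :=
  [:: [:: [:: 2; 4; 8; 16; 30]; [:: 8; 16; 3; 5; 30]; [:: 1; 2; 8; 16; 5; 30]; [:: 1; 4; 8; 16; 3; 30]];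
   [:: [:: 1; 1]; [:: 2; 4; 8; 16; 30]; [:: 2; 4; 8; 16; 30]; [:: 8; 16; 3; 5; 30]; [:: 8; 16; 3; 5; 30]];
   [:: [:: 8; 8]; [:: 16; 16]; [:: 30; 30]; [:: 2; 4; 3; 5]; [:: 1; 2; 8; 16; 5; 30]; [:: 1; 4; 8; 16; 3; 30]];
   [:: [:: 8; 8]; [:: 16; 16]; [:: 30; 30]; [:: 1; 2; 3]; [:: 1; 4; 5]; [:: 2; 4; 8; 16; 30]; [:: 8; 16; 3; 5; 30]];
   [:: [:: 1; 1]; [:: 8; 8]; [:: 16; 16]; [:: 3; 3]; [:: 5; 5]; [:: 30; 30]; [:: 2; 4; 8; 16; 30]; [:: 2; 4; 8; 16; 30]];
   [:: [:: 8; 8]; [:: 8; 8]; [:: 16; 16]; [:: 16; 16]; [:: 30; 30]; [:: 30; 30]; [:: 1; 2; 3]; [:: 1; 4; 5]; [:: 2; 4; 3; 5]];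
   [:: [:: 4; 4]; [:: 8; 8]; [:: 8; 8]; [:: 16; 16]; [:: 16; 16]; [:: 5; 5]; [:: 30; 30]; [:: 30; 30]; [:: 1; 2; 3]; [:: 1; 2; 3]];
   [:: [:: 1; 1]; [:: 2; 2]; [:: 4; 4]; [:: 8; 8]; [:: 8; 8]; [:: 16; 16]; [:: 16; 16]; [:: 3; 3]; [:: 5; 5]; [:: 30; 30]; [:: 30; 30]]].
Lemma FY22 : Fok NA Y22 F22. Proof. by vm_compute. Qed.
Lemma fam22 z j : in_system_of_sets C2_5 (fun k => z + 2 * j + 4 <= k <= z + 6 * j + 4 + 7).
Proof. exact: (@fam SA VA NA UA Y22 F22 4 z j 7 clA hlA a0A aUA asqA erefl FY22 erefl erefl isT isT isT erefl erefl isT isT isT isT). Qed.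
Lemma fam0_22 z : in_system_of_sets C2_5 (fun k => z + 4 <= k <= z + 4 + 7).
Proof. exact: (@fam0 SA VA NA Y22 F22 4 z 7 clA hlA a0A FY22 erefl erefl isT erefl isT isT isT isT). Qed.
Definition Y26 := [:: 1; 1; 1; 1; 2; 2; 4; 4; 8; 8; 8; 8; 16; 16; 16; 16; 3; 3; 5; 5; 5; 5; 30; 30; 30; 30].
Definition F26 :=
  [:: [:: [:: 1; 4; 5]; [:: 8; 16; 3; 5; 30]; [:: 1; 2; 8; 16; 5; 30]; [:: 1; 2; 8; 16; 5; 30]; [:: 1; 4; 8; 16; 3; 30]];
   [:: [:: 1; 1]; [:: 1; 4; 5]; [:: 2; 4; 8; 16; 30]; [:: 8; 16; 3; 5; 30]; [:: 8; 16; 3; 5; 30]; [:: 1; 2; 8; 16; 5; 30]];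
   [:: [:: 1; 1]; [:: 1; 1]; [:: 5; 5]; [:: 2; 4; 8; 16; 30]; [:: 2; 4; 8; 16; 30]; [:: 8; 16; 3; 5; 30]; [:: 8; 16; 3; 5; 30]];
   [:: [:: 8; 8]; [:: 16; 16]; [:: 30; 30]; [:: 1; 2; 3]; [:: 1; 4; 5]; [:: 1; 4; 5]; [:: 8; 16; 3; 5; 30]; [:: 1; 2; 8; 16; 5; 30]];
   [:: [:: 1; 1]; [:: 8; 8]; [:: 16; 16]; [:: 5; 5]; [:: 30; 30]; [:: 1; 2; 3]; [:: 1; 4; 5]; [:: 2; 4; 8; 16; 30]; [:: 8; 16; 3; 5; 30]];
   [:: [:: 1; 1]; [:: 1; 1]; [:: 8; 8]; [:: 16; 16]; [:: 3; 3]; [:: 5; 5]; [:: 5; 5]; [:: 30; 30]; [:: 2; 4; 8; 16; 30]; [:: 2; 4; 8; 16; 30]];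
   [:: [:: 8; 8]; [:: 8; 8]; [:: 16; 16]; [:: 16; 16]; [:: 5; 5]; [:: 30; 30]; [:: 30; 30]; [:: 1; 2; 3]; [:: 1; 2; 3]; [:: 1; 4; 5]; [:: 1; 4; 5]];
   [:: [:: 1; 1]; [:: 4; 4]; [:: 8; 8]; [:: 8; 8]; [:: 16; 16]; [:: 16; 16]; [:: 5; 5]; [:: 5; 5]; [:: 30; 30]; [:: 30; 30]; [:: 1; 2; 3]; [:: 1; 2; 3]];
   [:: [:: 1; 1]; [:: 1; 1]; [:: 2; 2]; [:: 4; 4]; [:: 8; 8]; [:: 8; 8]; [:: 16; 16]; [:: 16; 16]; [:: 3; 3]; [:: 5; 5]; [:: 5; 5]; [:: 30; 30]; [:: 30; 30]]].
Lemma FY26 : Fok NA Y26 F26. Proof. by vm_compute. Qed.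
Lemma fam26 z j : in_system_of_sets C2_5 (fun k => z + 2 * j + 5 <= k <= z + 6 * j + 5 + 8).
Proof. exact: (@fam SA VA NA UA Y26 F26 5 z j 8 clA hlA a0A aUA asqA erefl FY26 erefl erefl isT isT isT erefl erefl isT isT isT isT). Qed.
Lemma fam0_26 z : in_system_of_sets C2_5 (fun k => z + 5 <= k <= z + 5 + 8).
Proof. exact: (@fam0 SA VA NA Y26 F26 5 z 8 clA hlA a0A FY26 erefl erefl isT erefl isT isT isT isT). Qed.
Definition Y7 := [:: 1; 2; 4; 4; 3; 5; 5].
Definition F7 :=
  [:: [:: [:: 1; 4; 5]; [:: 2; 4; 3; 5]];
   [:: [:: 4; 4]; [:: 5; 5]; [:: 1; 2; 3]]].
Lemma FY7 : Fok NA Y7 F7. Proof. by vm_compute. Qed.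
Lemma fam0_7 z : in_system_of_sets C2_5 (fun k => z + 2 <= k <= z + 2 + 1).
Proof. exact: (@fam0 SA VA NA Y7 F7 2 z 1 clA hlA a0A FY7 erefl erefl isT erefl isT isT isT isT). Qed.
Definition Y19 := [:: 1; 1; 1; 2; 2; 4; 4; 4; 8; 8; 16; 16; 3; 3; 5; 5; 5; 30; 30].
Definition F19 :=
  [:: [:: [:: 1; 4; 5]; [:: 2; 4; 3; 5]; [:: 1; 2; 8; 16; 5; 30]; [:: 1; 4; 8; 16; 3; 30]];
   [:: [:: 1; 2; 3]; [:: 1; 4; 5]; [:: 1; 4; 5]; [:: 2; 4; 8; 16; 30]; [:: 8; 16; 3; 5; 30]];
   [:: [:: 1; 1]; [:: 3; 3]; [:: 5; 5]; [:: 1; 4; 5]; [:: 2; 4; 8; 16; 30]; [:: 2; 4; 8; 16; 30]];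
   [:: [:: 8; 8]; [:: 16; 16]; [:: 30; 30]; [:: 1; 2; 3]; [:: 1; 4; 5]; [:: 1; 4; 5]; [:: 2; 4; 3; 5]];
   [:: [:: 4; 4]; [:: 8; 8]; [:: 16; 16]; [:: 5; 5]; [:: 30; 30]; [:: 1; 2; 3]; [:: 1; 2; 3]; [:: 1; 4; 5]];
   [:: [:: 1; 1]; [:: 2; 2]; [:: 4; 4]; [:: 8; 8]; [:: 16; 16]; [:: 3; 3]; [:: 5; 5]; [:: 30; 30]; [:: 1; 4; 5]]].
Lemma FY19 : Fok NA Y19 F19. Proof. by vm_compute. Qed.
Lemma fam19 z j : in_system_of_sets C2_5 (fun k => z + 2 * j + 4 <= k <= z + 6 * j + 4 + 5).
Proof. exact: (@fam SA VA NA UA Y19 F19 4 z j 5 clA hlA a0A aUA asqA erefl FY19 erefl erefl isT isT isT erefl erefl isT isT isT isT). Qed.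
Lemma fam0_19 z : in_system_of_sets C2_5 (fun k => z + 4 <= k <= z + 4 + 5).
Proof. exact: (@fam0 SA VA NA Y19 F19 4 z 5 clA hlA a0A FY19 erefl erefl isT erefl isT isT isT isT). Qed.
Definition Y13 := [:: 1; 2; 4; 4; 8; 8; 3; 3; 3; 5; 5; 14; 14].
Definition F13 :=
  [:: [:: [:: 2; 4; 3; 5]; [:: 8; 3; 5; 14]; [:: 1; 4; 8; 3; 14]];
   [:: [:: 3; 3]; [:: 1; 4; 5]; [:: 2; 4; 8; 14]; [:: 8; 3; 5; 14]];
   [:: [:: 8; 8]; [:: 3; 3]; [:: 14; 14]; [:: 1; 4; 5]; [:: 2; 4; 3; 5]];
   [:: [:: 4; 4]; [:: 8; 8]; [:: 3; 3]; [:: 5; 5]; [:: 14; 14]; [:: 1; 2; 3]]].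
Lemma FY13 : Fok NC Y13 F13. Proof. by vm_compute. Qed.
Lemma fam0_13 z : in_system_of_sets C2_5 (fun k => z + 3 <= k <= z + 3 + 3).
Proof. exact: (@fam0 SC VC NC Y13 F13 3 z 3 clC hlC a0C FY13 erefl erefl isT erefl isT isT isT isT). Qed.
Definition Y14 := [:: 1; 1; 2; 2; 4; 4; 8; 8; 3; 3; 5; 5; 14; 14].
Definition F14 :=
  [:: [:: [:: 2; 4; 3; 5]; [:: 1; 2; 8; 5; 14]; [:: 1; 4; 8; 3; 14]];
   [:: [:: 1; 2; 3]; [:: 1; 4; 5]; [:: 2; 4; 8; 14]; [:: 8; 3; 5; 14]];
   [:: [:: 8; 8]; [:: 14; 14]; [:: 1; 2; 3]; [:: 1; 4; 5]; [:: 2; 4; 3; 5]];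
   [:: [:: 4; 4]; [:: 8; 8]; [:: 5; 5]; [:: 14; 14]; [:: 1; 2; 3]; [:: 1; 2; 3]];
   [:: [:: 1; 1]; [:: 2; 2]; [:: 4; 4]; [:: 8; 8]; [:: 3; 3]; [:: 5; 5]; [:: 14; 14]]].
Lemma FY14 : Fok NC Y14 F14. Proof. by vm_compute. Qed.
Lemma fam0_14 z : in_system_of_sets C2_5 (fun k => z + 3 <= k <= z + 3 + 4).
Proof. exact: (@fam0 SC VC NC Y14 F14 3 z 4 clC hlC a0C FY14 erefl erefl isT erefl isT isT isT isT). Qed.

Lemma or3_of (a b c : Prop) : a \/ b \/ c -> [\/ a, b | c].
Proof. by case=> [|[|]]; [constructor 1|constructor 2|constructor 3]. Qed.

Definition Be24 := [:: 2; 2; 4; 4; 3; 3; 5; 5].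
Definition Fe24 :=
  [:: [:: [:: 2; 4; 3; 5]; [:: 2; 4; 3; 5]];
   [:: [:: 2; 2]; [:: 4; 4]; [:: 3; 3]; [:: 5; 5]]].
Lemma FBe24 : Fok NA Be24 Fe24. Proof. by vm_compute. Qed.
Lemma sys_e24 : in_system_of_sets C2_5 (fun k => k = 2 \/ k = 4).
Proof.
apply: (@exact_sys NA SA VA Be24 _ Fe24 clA isT uVA FBe24 isT).
- move=> k [->|->] //.
- move=> c H; have E1 : sqs (size SA) ++ VA = [:: [:: 2; 0; 0; 0; 0; 0; 0; 0]; [:: 0; 2; 0; 0; 0; 0; 0; 0]; [:: 0; 0; 2; 0; 0; 0; 0; 0]; [:: 0; 0; 0; 2; 0; 0; 0; 0]; [:: 0; 0; 0; 0; 2; 0; 0; 0]; [:: 0; 0; 0; 0; 0; 2; 0; 0]; [:: 0; 0; 0; 0; 0; 0; 2; 0]; [:: 0; 0; 0; 0; 0; 0; 0; 2]; [:: 1; 1; 0; 0; 0; 1; 0; 0]; [:: 1; 0; 1; 0; 0; 0; 1; 0]; [:: 0; 1; 1; 0; 0; 1; 1; 0]; [:: 0; 1; 1; 1; 1; 0; 0; 1]; [:: 1; 0; 1; 1; 1; 1; 0; 1]; [:: 1; 1; 0; 1; 1; 0; 1; 1]; [:: 0; 0; 0; 1; 1; 1; 1; 1]] by vm_compute.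
  have E2 : cntv SA Be24 = [:: 0; 2; 2; 0; 0; 2; 2; 0] by vm_compute.
  rewrite E1 in H *; rewrite E2 in H.
  move: (H 0 isT) (H 1 isT) (H 2 isT) (H 3 isT) (H 4 isT) (H 5 isT) (H 6 isT) (H 7 isT).
  rewrite /=.
  move=> *; lia.
Qed.
Definition Be25 := [:: 2; 2; 4; 4; 8; 8; 16; 16; 30; 30].
Definition Fe25 :=
  [:: [:: [:: 2; 4; 8; 16; 30]; [:: 2; 4; 8; 16; 30]];
   [:: [:: 2; 2]; [:: 4; 4]; [:: 8; 8]; [:: 16; 16]; [:: 30; 30]]].
Lemma FBe25 : Fok NA Be25 Fe25. Proof. by vm_compute. Qed.
Lemma sys_e25 : in_system_of_sets C2_5 (fun k => k = 2 \/ k = 5).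
Proof.
apply: (@exact_sys NA SA VA Be25 _ Fe25 clA isT uVA FBe25 isT).
- move=> k [->|->] //.
- move=> c H; have E1 : sqs (size SA) ++ VA = [:: [:: 2; 0; 0; 0; 0; 0; 0; 0]; [:: 0; 2; 0; 0; 0; 0; 0; 0]; [:: 0; 0; 2; 0; 0; 0; 0; 0]; [:: 0; 0; 0; 2; 0; 0; 0; 0]; [:: 0; 0; 0; 0; 2; 0; 0; 0]; [:: 0; 0; 0; 0; 0; 2; 0; 0]; [:: 0; 0; 0; 0; 0; 0; 2; 0]; [:: 0; 0; 0; 0; 0; 0; 0; 2]; [:: 1; 1; 0; 0; 0; 1; 0; 0]; [:: 1; 0; 1; 0; 0; 0; 1; 0]; [:: 0; 1; 1; 0; 0; 1; 1; 0]; [:: 0; 1; 1; 1; 1; 0; 0; 1]; [:: 1; 0; 1; 1; 1; 1; 0; 1]; [:: 1; 1; 0; 1; 1; 0; 1; 1]; [:: 0; 0; 0; 1; 1; 1; 1; 1]] by vm_compute.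
  have E2 : cntv SA Be25 = [:: 0; 2; 2; 2; 2; 0; 0; 2] by vm_compute.
  rewrite E1 in H *; rewrite E2 in H.
  move: (H 0 isT) (H 1 isT) (H 2 isT) (H 3 isT) (H 4 isT) (H 5 isT) (H 6 isT) (H 7 isT).
  rewrite /=.
  move=> *; lia.
Qed.
Definition Be26 := [:: 1; 1; 4; 4; 8; 8; 16; 16; 3; 3; 30; 30].
Definition Fe26 :=
  [:: [:: [:: 1; 4; 8; 16; 3; 30]; [:: 1; 4; 8; 16; 3; 30]];
   [:: [:: 1; 1]; [:: 4; 4]; [:: 8; 8]; [:: 16; 16]; [:: 3; 3]; [:: 30; 30]]].
Lemma FBe26 : Fok NA Be26 Fe26. Proof. by vm_compute. Qed.
Lemma sys_e26 : in_system_of_sets C2_5 (fun k => k = 2 \/ k = 6).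
Proof.
apply: (@exact_sys NA SA VA Be26 _ Fe26 clA isT uVA FBe26 isT).
- move=> k [->|->] //.
- move=> c H; have E1 : sqs (size SA) ++ VA = [:: [:: 2; 0; 0; 0; 0; 0; 0; 0]; [:: 0; 2; 0; 0; 0; 0; 0; 0]; [:: 0; 0; 2; 0; 0; 0; 0; 0]; [:: 0; 0; 0; 2; 0; 0; 0; 0]; [:: 0; 0; 0; 0; 2; 0; 0; 0]; [:: 0; 0; 0; 0; 0; 2; 0; 0]; [:: 0; 0; 0; 0; 0; 0; 2; 0]; [:: 0; 0; 0; 0; 0; 0; 0; 2]; [:: 1; 1; 0; 0; 0; 1; 0; 0]; [:: 1; 0; 1; 0; 0; 0; 1; 0]; [:: 0; 1; 1; 0; 0; 1; 1; 0]; [:: 0; 1; 1; 1; 1; 0; 0; 1]; [:: 1; 0; 1; 1; 1; 1; 0; 1]; [:: 1; 1; 0; 1; 1; 0; 1; 1]; [:: 0; 0; 0; 1; 1; 1; 1; 1]] by vm_compute.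
  have E2 : cntv SA Be26 = [:: 2; 0; 2; 2; 2; 2; 0; 2] by vm_compute.
  rewrite E1 in H *; rewrite E2 in H.
  move: (H 0 isT) (H 1 isT) (H 2 isT) (H 3 isT) (H 4 isT) (H 5 isT) (H 6 isT) (H 7 isT).
  rewrite /=.
  move=> *; lia.
Qed.
Definition Be235 := [:: 1; 1; 2; 4; 8; 8; 16; 16; 3; 5; 30; 30].
Definition Fe235 :=
  [:: [:: [:: 1; 2; 8; 16; 5; 30]; [:: 1; 4; 8; 16; 3; 30]];
   [:: [:: 1; 1]; [:: 2; 4; 8; 16; 30]; [:: 8; 16; 3; 5; 30]];
   [:: [:: 8; 8]; [:: 16; 16]; [:: 30; 30]; [:: 1; 2; 3]; [:: 1; 4; 5]]].
Lemma FBe235 : Fok NA Be235 Fe235. Proof. by vm_compute. Qed.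
Lemma sys_e235 : in_system_of_sets C2_5 (fun k => [\/ k = 2, k = 3 | k = 5]).
Proof.
apply: (@exact_sys NA SA VA Be235 _ Fe235 clA isT uVA FBe235 isT).
- move=> k [->|->|->] //.
- move=> c H; have E1 : sqs (size SA) ++ VA = [:: [:: 2; 0; 0; 0; 0; 0; 0; 0]; [:: 0; 2; 0; 0; 0; 0; 0; 0]; [:: 0; 0; 2; 0; 0; 0; 0; 0]; [:: 0; 0; 0; 2; 0; 0; 0; 0]; [:: 0; 0; 0; 0; 2; 0; 0; 0]; [:: 0; 0; 0; 0; 0; 2; 0; 0]; [:: 0; 0; 0; 0; 0; 0; 2; 0]; [:: 0; 0; 0; 0; 0; 0; 0; 2]; [:: 1; 1; 0; 0; 0; 1; 0; 0]; [:: 1; 0; 1; 0; 0; 0; 1; 0]; [:: 0; 1; 1; 0; 0; 1; 1; 0]; [:: 0; 1; 1; 1; 1; 0; 0; 1]; [:: 1; 0; 1; 1; 1; 1; 0; 1]; [:: 1; 1; 0; 1; 1; 0; 1; 1]; [:: 0; 0; 0; 1; 1; 1; 1; 1]] by vm_compute.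
  have E2 : cntv SA Be235 = [:: 2; 1; 1; 2; 2; 1; 1; 2] by vm_compute.
  rewrite E1 in H *; rewrite E2 in H.
  move: (H 0 isT) (H 1 isT) (H 2 isT) (H 3 isT) (H 4 isT) (H 5 isT) (H 6 isT) (H 7 isT).
  rewrite /=.
  move=> *; apply: or3_of; lia.
Qed.
Definition Bi24 := [:: 1; 1; 2; 4; 8; 8; 3; 5; 14; 14].
Definition Fi24 :=
  [:: [:: [:: 1; 2; 8; 5; 14]; [:: 1; 4; 8; 3; 14]];
   [:: [:: 1; 1]; [:: 2; 4; 8; 14]; [:: 8; 3; 5; 14]];
   [:: [:: 8; 8]; [:: 14; 14]; [:: 1; 2; 3]; [:: 1; 4; 5]]].
Lemma FBi24 : Fok NC Bi24 Fi24. Proof. by vm_compute. Qed.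
Lemma sys_i24 : in_system_of_sets C2_5 (fun k => 2 <= k <= 4).
Proof.
apply: (@exact_sys NC SC VC Bi24 _ Fi24 clC isT uVC FBi24 isT).
- move=> k hk; case: k hk => [|[|[|[|[|[|]]]]]] //.
- move=> c H; have E1 : sqs (size SC) ++ VC = [:: [:: 2; 0; 0; 0; 0; 0; 0]; [:: 0; 2; 0; 0; 0; 0; 0]; [:: 0; 0; 2; 0; 0; 0; 0]; [:: 0; 0; 0; 2; 0; 0; 0]; [:: 0; 0; 0; 0; 2; 0; 0]; [:: 0; 0; 0; 0; 0; 2; 0]; [:: 0; 0; 0; 0; 0; 0; 2]; [:: 1; 1; 0; 0; 1; 0; 0]; [:: 1; 0; 1; 0; 0; 1; 0]; [:: 0; 1; 1; 0; 1; 1; 0]; [:: 0; 1; 1; 1; 0; 0; 1]; [:: 1; 0; 1; 1; 1; 0; 1]; [:: 1; 1; 0; 1; 0; 1; 1]; [:: 0; 0; 0; 1; 1; 1; 1]] by vm_compute.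
  have E2 : cntv SC Bi24 = [:: 2; 1; 1; 2; 1; 1; 2] by vm_compute.
  rewrite E1 in H *; rewrite E2 in H.
  move: (H 0 isT) (H 1 isT) (H 2 isT) (H 3 isT) (H 4 isT) (H 5 isT) (H 6 isT).
  rewrite /=.
  move=> *; lia.
Qed.
Definition Bi35 := [:: 2; 2; 4; 4; 8; 16; 3; 3; 3; 5; 5; 5; 30].
Definition Fi35 :=
  [:: [:: [:: 2; 4; 3; 5]; [:: 2; 4; 3; 5]; [:: 8; 16; 3; 5; 30]];
   [:: [:: 3; 3]; [:: 5; 5]; [:: 2; 4; 3; 5]; [:: 2; 4; 8; 16; 30]];
   [:: [:: 2; 2]; [:: 4; 4]; [:: 3; 3]; [:: 5; 5]; [:: 8; 16; 3; 5; 30]]].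
Lemma FBi35 : Fok NA Bi35 Fi35. Proof. by vm_compute. Qed.
Lemma sys_i35 : in_system_of_sets C2_5 (fun k => 3 <= k <= 5).
Proof.
apply: (@exact_sys NA SA VA Bi35 _ Fi35 clA isT uVA FBi35 isT).
- move=> k hk; case: k hk => [|[|[|[|[|[|]]]]]] //.
- move=> c H; have E1 : sqs (size SA) ++ VA = [:: [:: 2; 0; 0; 0; 0; 0; 0; 0]; [:: 0; 2; 0; 0; 0; 0; 0; 0]; [:: 0; 0; 2; 0; 0; 0; 0; 0]; [:: 0; 0; 0; 2; 0; 0; 0; 0]; [:: 0; 0; 0; 0; 2; 0; 0; 0]; [:: 0; 0; 0; 0; 0; 2; 0; 0]; [:: 0; 0; 0; 0; 0; 0; 2; 0]; [:: 0; 0; 0; 0; 0; 0; 0; 2]; [:: 1; 1; 0; 0; 0; 1; 0; 0]; [:: 1; 0; 1; 0; 0; 0; 1; 0]; [:: 0; 1; 1; 0; 0; 1; 1; 0]; [:: 0; 1; 1; 1; 1; 0; 0; 1]; [:: 1; 0; 1; 1; 1; 1; 0; 1]; [:: 1; 1; 0; 1; 1; 0; 1; 1]; [:: 0; 0; 0; 1; 1; 1; 1; 1]] by vm_compute.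
  have E2 : cntv SA Bi35 = [:: 0; 2; 2; 1; 1; 3; 3; 1] by vm_compute.
  rewrite E1 in H *; rewrite E2 in H.
  move: (H 0 isT) (H 1 isT) (H 2 isT) (H 3 isT) (H 4 isT) (H 5 isT) (H 6 isT) (H 7 isT).
  rewrite /=.
  move=> *; lia.
Qed.
Definition Be245 := [:: 1; 2; 4; 8; 8; 16; 16; 7; 11; 11; 21; 21].
Definition Fe245 :=
  [:: [:: [:: 1; 8; 16; 7; 11; 21]; [:: 2; 4; 8; 16; 11; 21]];
   [:: [:: 16; 16]; [:: 21; 21]; [:: 1; 2; 8; 11]; [:: 4; 8; 7; 11]];
   [:: [:: 8; 8]; [:: 16; 16]; [:: 11; 11]; [:: 21; 21]; [:: 1; 2; 4; 7]]].
Lemma FBe245 : Fok NB Be245 Fe245. Proof. by vm_compute. Qed.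
Lemma sys_e245 : in_system_of_sets C2_5 (fun k => [\/ k = 2, k = 4 | k = 5]).
Proof.
apply: (@exact_sys NB SB VB Be245 _ Fe245 clB isT uVB FBe245 isT).
- move=> k [->|->|->] //.
- move=> c H; have E1 : sqs (size SB) ++ VB = [:: [:: 2; 0; 0; 0; 0; 0; 0; 0]; [:: 0; 2; 0; 0; 0; 0; 0; 0]; [:: 0; 0; 2; 0; 0; 0; 0; 0]; [:: 0; 0; 0; 2; 0; 0; 0; 0]; [:: 0; 0; 0; 0; 2; 0; 0; 0]; [:: 0; 0; 0; 0; 0; 2; 0; 0]; [:: 0; 0; 0; 0; 0; 0; 2; 0]; [:: 0; 0; 0; 0; 0; 0; 0; 2]; [:: 1; 1; 1; 0; 0; 1; 0; 0]; [:: 1; 1; 0; 1; 0; 0; 1; 0]; [:: 0; 0; 1; 1; 0; 1; 1; 0]; [:: 1; 0; 1; 0; 1; 0; 0; 1]; [:: 0; 1; 0; 0; 1; 1; 0; 1]; [:: 0; 1; 1; 1; 1; 0; 1; 1]; [:: 1; 0; 0; 1; 1; 1; 1; 1]] by vm_compute.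
  have E2 : cntv SB Be245 = [:: 1; 1; 1; 2; 2; 1; 2; 2] by vm_compute.
  rewrite E1 in H *; rewrite E2 in H.
  move: (H 0 isT) (H 1 isT) (H 2 isT) (H 3 isT) (H 4 isT) (H 5 isT) (H 6 isT) (H 7 isT).
  rewrite /=.
  move=> *; apply: or3_of; lia.
Qed.


Lemma ext_int (lo hi lo' hi' : nat) : lo = lo' -> hi = hi' ->
  in_system_of_sets C2_5 (fun k => lo <= k <= hi) -> Lset (fun k => lo' <= k <= hi').
Proof. by move=> -> ->. Qed.

Theorem lemma3p2 :
  (* part 1 *)
  (Lset (fun k => 2 <= k <= 3) /\ Lset (fun k => 2 <= k <= 4) /\
   Lset (fun k => 3 <= k <= 6) /\ Lset (fun k => 3 <= k <= 7) /\
   Lset (fun k => 4 <= k <= 9) /\ Lset (fun k => 4 <= k <= 10) /\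
   Lset (fun k => 4 <= k <= 11) /\
   Lset (fun k => k = 2 \/ k = 4) /\ Lset (fun k => k = 2 \/ k = 5) /\
   Lset (fun k => k = 2 \/ k = 6) /\ Lset (fun k => [\/ k = 2, k = 3 | k = 5]) /\
   Lset (fun k => [\/ k = 2, k = 4 | k = 5])) /\
  (* part 2 *)
  (forall n : nat, 2 <= n ->
     [/\ Lset (fun k => 2 * n <= k <= 6 * n - 4), Lset (fun k => 2 * n <= k <= 6 * n - 3),
         Lset (fun k => 2 * n <= k <= 6 * n - 2) & Lset (fun k => 2 * n <= k <= 6 * n - 1)]) /\
  (* part 3 *)
  (forall n : nat, 1 <= n ->
     [/\ Lset (fun k => 2 * n + 1 <= k <= 6 * n - 2), Lset (fun k => 2 * n + 1 <= k <= 6 * n - 1),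
         Lset (fun k => 2 * n + 1 <= k <= 6 * n) & Lset (fun k => 2 * n + 1 <= k <= 6 * n + 1)]).
Proof.
split; [|split].
- split; first exact: (fam0_7 0).
  split; first exact: sys_i24.
  split; first exact: (fam0_13 0).
  split; first exact: (fam0_14 0).
  split; first exact: (fam0_19 0).
  split; first exact: (fam0_20 0).
  split; first exact: (fam0_22 0).
  split; first exact: sys_e24.
  split; first exact: sys_e25.
  split; first exact: sys_e26.
  split; first exact: sys_e235.
  exact: sys_e245.
- case=> [|[|m]] // _; split.
  + case: m => [|m]; first exact: (fam0_14 1).
    by eapply ext_int; last exact: (fam26 1 m); lia.
  + by eapply ext_int; last exact: (fam16 1 m); lia.
  + by eapply ext_int; last exact: (fam20 0 m); lia.
  + by eapply ext_int; last exact: (fam22 0 m); lia.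
- case=> [|[|m]] // _; split.
  + exact: (fam0_7 1).
  + exact: sys_i35.
  + exact: (fam0_13 0).
  + exact: (fam0_14 0).
  + by eapply ext_int; last exact: (fam16 2 m); lia.
  + by eapply ext_int; last exact: (fam20 1 m); lia.
  + by eapply ext_int; last exact: (fam22 1 m); lia.
  + by eapply ext_int; last exact: (fam26 0 m); lia.
Qed.
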